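(* Let $G$ be a group with finite generating set $S$ (with $S=S^{-1}$, $e\notin S$), and let $N\le G$ be a normal subgroup which is infinite cyclic. Then $\kappa(g)=0$ for all $g\in N\smallsetminus\{e\}$.
   Context: For a group $G$ with finite generating set $S$ ($S=S^{-1}$, $e\notin S$), $|x|$ denotes the word length of $x\in G$ with respect to $S$. For $g\in G$ define $\mathrm{Av}(g)=\frac{1}{|S|}\sum_{a\in S}|a^{-1}ga|$, and for $g\neq e$ define the curvature $\kappa(g)=\frac{|g|-\mathrm{Av}(g)}{|g|}$. *)

(* Defs.v *)
From Stdlib Require Import Reals ZArith List ClassicalEpsilon.
Import ListNotations.
Open Scope R_scope.

Record Group := {
  carrier :> Type;
  gmul : carrier -> carrier -> carrier;
  ginv : carrier -> carrier;
  gone : carrier;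
  gmulA : forall x y z, gmul x (gmul y z) = gmul (gmul x y) z;
  gmul1l : forall x, gmul gone x = x;
  gmul1r : forall x, gmul x gone = x;
  gmulVl : forall x, gmul (ginv x) x = gone;
  gmulVr : forall x, gmul x (ginv x) = gone
}.

Arguments gmul {g} x y.
Arguments ginv {g} x.
Arguments gone {g}.

Definition word_prod {G : Group} (w : list G) : G :=
  fold_right gmul gone w.

Definition word_in {G : Group} (S : list G) (w : list G) : Prop :=
  Forall (fun a => In a S) w.

Definition fin_sym_gen_set {G : Group} (S : list G) : Prop :=
  NoDup S /\
  (forall a, In a S -> In (ginv a) S) /\
  ~ In gone S /\
  (forall x : G, exists w, word_in S w /\ word_prod w = x).

Definition is_word_length {G : Group} (S : list G) (x : G) (n : nat) : Prop :=
  (exists w, word_in S w /\ word_prod w = x /\ length w = n) /\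
  (forall w, word_in S w -> word_prod w = x -> (n <= length w)%nat).

(* |x|_S : the word length (well defined when S generates G). *)
Definition wlen {G : Group} (S : list G) (x : G) : nat :=
  epsilon (inhabits 0%nat) (is_word_length S x).

Definition Av {G : Group} (S : list G) (g : G) : R :=
  (/ INR (length S)) *
  fold_right Rplus 0 (map (fun a => INR (wlen S (gmul (ginv a) (gmul g a)))) S).

Definition kappa {G : Group} (S : list G) (g : G) : R :=
  (INR (wlen S g) - Av S g) / INR (wlen S g).

Definition gzpow {G : Group} (t : G) (k : Z) : G :=
  match k with
  | Z0 => gone
  | Zpos p => Nat.iter (Pos.to_nat p) (gmul t) gone
  | Zneg p => Nat.iter (Pos.to_nat p) (gmul (ginv t)) gone
  end.

Definition is_normal_subgroup {G : Group} (N : G -> Prop) : Prop :=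
  N gone /\
  (forall x y, N x -> N y -> N (gmul x y)) /\
  (forall x, N x -> N (ginv x)) /\
  (forall x g, N x -> N (gmul (ginv g) (gmul x g))).

Definition is_infinite_cyclic {G : Group} (N : G -> Prop) : Prop :=
  exists t : G,
    (forall x, N x <-> exists k : Z, x = gzpow t k) /\
    (forall k : Z, gzpow t k = gone -> k = 0%Z).

(* Main.v *)
Require Import Defs.
From Stdlib Require Import Reals ZArith List.
From Stdlib Require Import Lia Classical ClassicalEpsilon.
Open Scope R_scope.

Arguments gmulA {g} x y z.
Arguments gmul1l {g} x.
Arguments gmul1r {g} x.
Arguments gmulVl {g} x.
Arguments gmulVr {g} x.

Section GL.
Context {G : Group}.

Lemma mul_cancel_l (x y z : G) : gmul x y = gmul x z -> y = z.
Proof.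
  intro H. rewrite <- (gmul1l y), <- (gmul1l z), <- (gmulVl x), <- !gmulA, H. reflexivity.
Qed.

Lemma inv_uniq (x y : G) : gmul x y = gone -> y = ginv x.
Proof. intro H. apply (mul_cancel_l x). rewrite H, gmulVr. reflexivity. Qed.

Lemma ginv_ginv (x : G) : ginv (ginv x) = x.
Proof. symmetry. apply inv_uniq. apply gmulVl. Qed.

Lemma ginv_mul (x y : G) : ginv (gmul x y) = gmul (ginv y) (ginv x).
Proof.
  symmetry. apply inv_uniq.
  rewrite gmulA, <- (gmulA x y), gmulVr, gmul1r, gmulVr. reflexivity.
Qed.

Lemma ginv_one : ginv (@gone G) = gone.
Proof. symmetry. apply inv_uniq. apply gmul1l. Qed.

Lemma zp_nat (t : G) (n : nat) : gzpow t (Z.of_nat n) = Nat.iter n (gmul t) gone.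
Proof.
  destruct n. reflexivity.
  simpl. rewrite SuccNat2Pos.id_succ. reflexivity.
Qed.

Lemma zp_negnat (t : G) (n : nat) : gzpow t (- Z.of_nat n)%Z = Nat.iter n (gmul (ginv t)) gone.
Proof.
  destruct n. reflexivity.
  simpl. rewrite SuccNat2Pos.id_succ. reflexivity.
Qed.

Lemma zp_succ (t : G) (k : Z) : gzpow t (Z.succ k) = gmul t (gzpow t k).
Proof.
  destruct (Z_le_gt_dec 0 k).
  - replace k with (Z.of_nat (Z.to_nat k)) by lia.
    replace (Z.succ (Z.of_nat (Z.to_nat k))) with (Z.of_nat (S (Z.to_nat k))) by lia.
    rewrite !zp_nat. reflexivity.
  - remember (Z.to_nat (- Z.succ k)) as n.
    replace k with (- Z.of_nat (S n))%Z by lia.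
    replace (Z.succ (- Z.of_nat (S n))%Z) with (- Z.of_nat n)%Z by lia.
    rewrite !zp_negnat. simpl. rewrite gmulA, gmulVr, gmul1l. reflexivity.
Qed.

Lemma zp_pred (t : G) (k : Z) : gzpow t (Z.pred k) = gmul (ginv t) (gzpow t k).
Proof.
  rewrite <- (Z.succ_pred k) at 2. rewrite zp_succ, gmulA, gmulVl, gmul1l. reflexivity.
Qed.

Lemma zp_add (t : G) (a b : Z) : gzpow t (a + b) = gmul (gzpow t a) (gzpow t b).
Proof.
  induction a using Z.peano_ind.
  - simpl. rewrite gmul1l. reflexivity.
  - rewrite Z.add_succ_l, !zp_succ, IHa, gmulA. reflexivity.
  - rewrite Z.add_pred_l, !zp_pred, IHa, gmulA. reflexivity.
Qed.

Lemma zp_opp (t : G) (a : Z) : gzpow t (- a)%Z = ginv (gzpow t a).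
Proof.
  apply inv_uniq. rewrite <- zp_add. replace (a + - a)%Z with 0%Z by lia. reflexivity.
Qed.

Lemma zp_mul (t : G) (a b : Z) : gzpow t (a * b) = gzpow (gzpow t a) b.
Proof.
  induction b using Z.peano_ind.
  - rewrite Z.mul_0_r. reflexivity.
  - rewrite Z.mul_succ_r, zp_succ, Z.add_comm, zp_add, IHb. reflexivity.
  - replace (a * Z.pred b)%Z with (- a + a * b)%Z by lia.
    rewrite zp_pred, zp_add, zp_opp, IHb. reflexivity.
Qed.

Lemma zp_hom (f : G -> G) (t : G) (k : Z)
  (fM : forall x y, f (gmul x y) = gmul (f x) (f y)) (f1 : f gone = gone)
  (fV : forall x, f (ginv x) = ginv (f x)) :
  f (gzpow t k) = gzpow (f t) k.
Proof.
  induction k using Z.peano_ind.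
  - exact f1.
  - rewrite !zp_succ, fM, IHk. reflexivity.
  - rewrite !zp_pred, fM, fV, IHk. reflexivity.
Qed.

Definition conj (a x : G) := gmul (ginv a) (gmul x a).

Lemma conj_zp (a t : G) (k : Z) : conj a (gzpow t k) = gzpow (conj a t) k.
Proof.
  apply zp_hom; unfold conj.
  - intros x y. rewrite !gmulA. rewrite <- (gmulA _ a (ginv a)), gmulVr, gmul1r.
    reflexivity.
  - rewrite gmul1l, gmulVl. reflexivity.
  - intros x. rewrite !ginv_mul, ginv_ginv, gmulA. reflexivity.
Qed.

Lemma word_prod_app (l1 l2 : list G) : word_prod (l1 ++ l2) = gmul (word_prod l1) (word_prod l2).
Proof.
  induction l1; simpl. rewrite gmul1l; reflexivity.
  unfold word_prod in *. simpl. rewrite IHl1, gmulA. reflexivity.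
Qed.

Lemma word_prod_inv (w : list G) : word_prod (rev (map ginv w)) = ginv (word_prod w).
Proof.
  induction w; simpl. symmetry; apply ginv_one.
  rewrite word_prod_app, IHw. unfold word_prod at 2. simpl.
  rewrite gmul1r, ginv_mul. reflexivity.
Qed.

Lemma least_nat (P : nat -> Prop) : (exists n, P n) -> exists m, P m /\ forall k, P k -> (m <= k)%nat.
Proof.
  intros [n Hn]. revert Hn. induction n as [n IH] using (well_founded_induction lt_wf).
  intro Hn. destruct (classic (exists k, (k < n)%nat /\ P k)) as [[k [Hk Pk]]|H].
  - exact (IH k Hk Pk).
  - exists n. split; auto. intros k Pk. destruct (le_lt_dec n k); auto.
    exfalso; apply H; eauto.
Qed.

Lemma wlen_spec (S : list G) (x : G) : fin_sym_gen_set S -> is_word_length S x (wlen S x).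
Proof.
  intros [_ [_ [_ Hgen]]]. unfold wlen. apply epsilon_spec.
  destruct (least_nat (fun n => exists w, word_in S w /\ word_prod w = x /\ length w = n)) as [m [Hm Hmin]].
  - destruct (Hgen x) as [w [H1 H2]]. eauto.
  - exists m. split; auto. intros w H1 H2. apply Hmin. eauto.
Qed.

Lemma wlen_inv_le (S : list G) (x : G) : fin_sym_gen_set S -> (wlen S (ginv x) <= wlen S x)%nat.
Proof.
  intro HS. pose proof (wlen_spec S x HS) as [[w [H1 [H2 H3]]] _].
  pose proof (wlen_spec S (ginv x) HS) as [_ Hmin].
  rewrite <- H3. replace (length w) with (length (rev (map ginv w))).
  2:{ rewrite length_rev, length_map. reflexivity. }
  apply Hmin.
  - unfold word_in in *. rewrite Forall_forall in *. intros y Hy.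
    apply in_rev in Hy. apply in_map_iff in Hy. destruct Hy as [z [<- Hz]].
    destruct HS as [_ [Hs _]]. auto.
  - rewrite word_prod_inv, H2. reflexivity.
Qed.

Lemma wlen_inv (S : list G) (x : G) : fin_sym_gen_set S -> wlen S (ginv x) = wlen S x.
Proof.
  intro HS. apply Nat.le_antisymm. apply wlen_inv_le; auto.
  rewrite <- (ginv_ginv x) at 1. apply wlen_inv_le; auto.
Qed.

End GL.

Lemma sum_const (S : list R) (c : R) : (forall x, In x S -> x = c) ->
  fold_right Rplus 0 S = INR (length S) * c.
Proof.
  induction S as [|x S IH]; intros H; simpl. ring.
  rewrite IH by (intros; apply H; simpl; auto). rewrite (H x) by (simpl; auto).
  destruct (length S); simpl; ring.
Qed.

Theorem mainTheorem3 (G : Group) (S : list G) (N : G -> Prop)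
  (HS : fin_sym_gen_set S)
  (HN : is_normal_subgroup N)
  (HNcyc : is_infinite_cyclic N) :
  forall g : G, N g -> g <> gone -> kappa S g = 0.
Proof.
  intros g Ng gne. destruct HNcyc as [t [Ht Hinf]].
  destruct HN as [_ [_ [_ HNc]]].
  assert (Nt : N t). { apply Ht. exists 1%Z. simpl. rewrite gmul1r. reflexivity. }
  assert (Hclaim : forall a : G, wlen S (conj a g) = wlen S g).
  { intro a.
    destruct (proj1 (Ht g) Ng) as [j Hj].
    destruct (proj1 (Ht _) (HNc t a Nt)) as [k Hk].
    destruct (proj1 (Ht _) (HNc t (ginv a) Nt)) as [m Hm].
    assert (E : conj a (conj (ginv a) t) = t).
    { unfold conj. rewrite ginv_ginv.
      rewrite !gmulA, gmulVl, gmul1l, <- gmulA, gmulVl, gmul1r. reflexivity. }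
    fold (conj a t) in Hk. fold (conj (ginv a) t) in Hm.
    rewrite Hm, conj_zp, Hk, <- zp_mul in E.
    assert (km : (k * m)%Z = 1%Z).
    { assert (gzpow t (k * m - 1) = gone).
      { replace (k * m - 1)%Z with (k * m + - (1))%Z by lia.
        rewrite zp_add, E, zp_opp. simpl. rewrite gmul1r, gmulVr. reflexivity. }
      apply Hinf in H. lia. }
    apply Z.eq_mul_1 in km.
    rewrite Hj, conj_zp, Hk, <- zp_mul.
    destruct km as [-> | ->].
    - rewrite Z.mul_1_l. reflexivity.
    - replace (- (1) * j)%Z with (- j)%Z by lia. rewrite zp_opp. apply wlen_inv; auto. }
  assert (Hne : S <> nil).
  { intro HS0. apply gne. destruct HS as [_ [_ [_ Hgen]]].
    destruct (Hgen g) as [w [Hw Hp]]. subst S. destruct w as [|x w].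
    - rewrite <- Hp. reflexivity.
    - inversion Hw. contradiction. }
  assert (Hav : Av S g = INR (wlen S g)).
  { unfold Av. rewrite sum_const with (c := INR (wlen S g)).
    - rewrite length_map. field. apply not_0_INR. destruct S; simpl; [congruence|lia].
    - intros x Hx. apply in_map_iff in Hx. destruct Hx as [a [<- _]].
      fold (conj a g). rewrite Hclaim. reflexivity. }
  unfold kappa. rewrite Hav. unfold Rdiv. ring.
Qed.
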